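(* If $S=\{v_1,\ldots,v_n\}\subset\mathbb Z^n$ is an orthogonal subset with $|V_\alpha|\ge2$ for all $\alpha$, then $p_1(S)=0$.
   Context: $\mathbb Z^n$ carries the standard dot product with standard basis $e_1,\ldots,e_n$. $S$ is orthogonal if $\langle v_i,v_i\rangle\ge1$ for all $i$ and $\langle v_i,v_j\rangle=0$ for $i\ne j$. $V_\alpha=\{j:\langle v_\alpha,e_j\rangle\ne0\}$, $E_j=\{\alpha:\langle v_\alpha,e_j\rangle\ne0\}$, and $p_1(S)=|\{j:|E_j|=1\}|$. *)

(* Defs.v *)
From mathcomp Require Import all_boot all_order all_algebra.
Set Implicit Arguments. Unset Strict Implicit. Unset Printing Implicit Defensive.
Import Order.TTheory GRing.Theory Num.Theory.
Local Open Scope ring_scope.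

(* A family S = (v_alpha)_{alpha < n} of vectors in Z^n; v alpha j = <v_alpha, e_j>. *)
Definition dotZ (n : nat) (x y : 'I_n -> int) : int := \sum_(j < n) x j * y j.

Definition orthogonal_family (n : nat) (v : 'I_n -> 'I_n -> int) : Prop :=
  (forall i, 1 <= dotZ (v i) (v i)) /\
  (forall i j, i != j -> dotZ (v i) (v j) = 0).

Definition Vset (n : nat) (v : 'I_n -> 'I_n -> int) (a : 'I_n) : {set 'I_n} :=
  [set j | v a j != 0].

Definition Eset (n : nat) (v : 'I_n -> 'I_n -> int) (j : 'I_n) : {set 'I_n} :=
  [set a | v a j != 0].

Definition p1 (n : nat) (v : 'I_n -> 'I_n -> int) : nat :=
  #|[set j | #|Eset v j| == 1%N]|.

(* Main.v *)
Require Import Defs.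
From mathcomp Require Import all_boot all_order all_algebra.
Set Implicit Arguments. Unset Strict Implicit. Unset Printing Implicit Defensive.
Import Order.TTheory GRing.Theory Num.Theory.
Local Open Scope ring_scope.

Definition Mof (n : nat) (v : 'I_n -> 'I_n -> int) : 'M[rat]_n :=
  \matrix_(i, j) (v i j)%:~R.
Definition dinv (n : nat) (v : 'I_n -> 'I_n -> int) : 'rV[rat]_n :=
  \row_i ((dotZ (v i) (v i))%:~R)^-1.

Lemma key (n : nat) (v : 'I_n -> 'I_n -> int) :
  orthogonal_family v ->
  ((Mof v)^T *m diag_mx (dinv v)) *m Mof v = 1%:M.
Proof.
move=> [Hpos Horth]; set M := Mof v; set Dinv := diag_mx _.
apply: mulmx1C; rewrite mulmxA mul_mx_diag.
apply/matrixP => i k; rewrite mxE [X in _ * X]mxE.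
have -> : (M *m M^T) i k = (dotZ (v i) (v k))%:~R.
  rewrite !mxE /dotZ rmorph_sum; apply: eq_bigr => j _.
  by rewrite !mxE rmorphM.
rewrite mxE; case: (eqVneq i k) => [->|ne].
  rewrite mulfV //= intr_eq0; apply/eqP => h.
  by have := Hpos k; rewrite h.
by rewrite Horth // mul0r.
Qed.

Local Close Scope ring_scope.
Theorem lemma4p1 (n : nat) (v : 'I_n -> 'I_n -> int) :
  orthogonal_family v ->
  (forall a : 'I_n, (2 <= #|Vset v a|)%N) ->
  p1 v = 0%N.
Proof.
move=> Hor HV.
Local Open Scope ring_scope.
apply/eqP; rewrite cards_eq0; apply/eqP/setP => j; rewrite inE in_set0.
apply/negP => /cards1P [a Ha].
have Hk := key Hor.
rewrite mul_mx_diag in Hk.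
have Hz : forall b, b != a -> v b j = 0.
  move=> b nb; apply/eqP; apply: contraNT nb => nz.
  have : b \in Eset v j by rewrite /Eset inE.
  by rewrite Ha inE.
have Haj : v a j != 0.
  have : a \in Eset v j by rewrite Ha set11.
  by rewrite /Eset inE.
have Hsub : Vset v a \subset [set j].
  apply/subsetP => k; rewrite /Vset !inE => nk.
  apply/eqP; apply: contraNeq nk => nkj.
  have := congr1 (fun A : 'M[rat]_n => A j k) Hk => /=.
  rewrite mxE [in RHS]mxE eq_sym (negbTE nkj) (bigD1 a) //= big1 ?addr0; last first.
    by move=> b nb; rewrite !mxE Hz // !mul0r.
  rewrite !mxE => /eqP; rewrite !mulf_eq0 invr_eq0 !intr_eq0 (negbTE Haj) /=.
  have : dotZ (v a) (v a) != 0.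
    by apply/eqP => h; have := Hor.1 a; rewrite h.
  by move/negbTE => ->.
have := HV a; have := subset_leq_card Hsub; rewrite cards1.
by case: #|Vset v a| => [|[|]].
Qed.
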